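(* Let $P_d$ denote the probability that a $d\times d$ matrix with independent, uniformly distributed entries in $\{0,1\}$ is singular. Then $P_d>\frac{d^2}{2^d}$ for all sufficiently large $d$. *)

(* Defs.v *)
From mathcomp Require Import all_boot all_order all_algebra.
Set Implicit Arguments. Unset Strict Implicit. Unset Printing Implicit Defensive.
Import Order.TTheory GRing.Theory Num.Theory.
Local Open Scope ring_scope.

Definition mx01 (d : nat) (B : 'M[bool]_d) : 'M[rat]_d :=
  \matrix_(i, j) (B i j)%:R.

(* A 0/1 matrix is singular iff its determinant (over Q, equivalently R) is 0. *)
Definition singular01 (d : nat) (B : 'M[bool]_d) : bool :=
  \det (mx01 B) == 0.

Definition P (d : nat) : rat :=
  (#|[pred B : 'M[bool]_d | singular01 B]|)%:R / (2 ^ (d * d))%N%:R.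

(* Main.v *)
Require Import Defs.
From mathcomp Require Import all_boot all_order all_algebra.
From mathcomp Require Import zify.
Import Order.TTheory GRing.Theory Num.Theory.

Section Count.
Variable d : nat.
Local Notation M := 'M[bool]_d.
Local Notation C := ('I_d * 'I_d)%type.

Lemma count_det (S : {set M}) (K : {set C}) (f : C -> option C) :
 (forall c y, c \in K -> f c = Some y -> (y.1 + y.2 < c.1 + c.2)%N) ->
 (forall B c, B \in S -> c \in K ->
     B c.1 c.2 = if f c is Some y then B y.1 y.2 else false) ->
 (#|S| <= 2 ^ #|~: K|)%N.
Proof.
move=> hlt hf.
pose psi (B : M) := [ffun c : C => if c \in K then false else B c.1 c.2].
have inj : {in S &, injective psi}.
  move=> B B' hB hB' e; apply/matrixP => i j.
  suff H : forall n (c : C), (c.1 + c.2 < n)%N -> B c.1 c.2 = B' c.1 c.2.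
    exact: (H _ (i, j) (ltnSn _)).
  elim=> [|n IH] c //= hc.
  case: (boolP (c \in K)) => cK.
    rewrite (hf B c hB cK) (hf B' c hB' cK).
    case E: (f c) => [y|] //; apply: IH.
    have := hlt c y cK E; move: hc; move: (_ + _)%N (_ + _)%N => u v; lia.
  have := congr1 (fun g : {ffun C -> bool} => g c) e; rewrite /psi !ffunE (negbTE cK); done.
rewrite -(card_in_imset inj).
have -> : (2 ^ #|~: K| = #|pffun_on false (~: K) (@predT bool)|)%N.
  by rewrite card_pffun_on; congr (_ ^ _)%N; rewrite -card_bool.
apply: subset_leq_card; apply/subsetP => g /imsetP [B hB ->].
apply/pffun_onP; split.
  apply/subsetP => c; rewrite !inE /psi ffunE; by case: (c \in K).
by move=> b _.
Qed.


Definition get (B : M) (b : bool) (x k : 'I_d) : bool := if b then B k x else B x k.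
Definition line (b : bool) (x : 'I_d) : {set C} :=
  [set c | (if b then c.2 else c.1) == x].
Definition reduced (S : {set M}) (b : bool) (x : 'I_d) (o : option 'I_d) :=
  (forall y, o = Some y -> (y < x)%N) /\
  forall B, B \in S -> forall k, get B b x k = if o is Some y then get B b y k else false.
Definition shift (b : bool) (o : option 'I_d) (c : C) : option C :=
  if o is Some y then Some (if b then (c.1, y) else (y, c.2)) else None.

Lemma reduced_sub (S S' : {set M}) b x o : S' \subset S -> reduced S b x o -> reduced S' b x o.
Proof. by move=> /subsetP sS [h1 h2]; split=> // B /sS; apply: h2. Qed.

Arguments reduced_sub {S S' b x o}.

Lemma reduced_cell (S : {set M}) b x o : reduced S b x o ->
  (forall c y, c \in line b x -> shift b o c = Some y -> (y.1 + y.2 < c.1 + c.2)%N) /\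
  (forall B c, B \in S -> c \in line b x ->
     B c.1 c.2 = if shift b o c is Some y then B y.1 y.2 else false).
Proof.
move=> [h1 h2]; split.
  move=> [c1 c2] y; rewrite inE /shift /=.
  case: o h1 h2 => [z|] // h1 _ /eqP hc [<-].
  have := h1 z erefl; case: b hc => /= -> ; lia.
move=> B [c1 c2] hB; rewrite inE /= => /eqP hc.
have := h2 B hB; rewrite /get /shift.
by case: b h2 hc => _ /= -> ->; case: o h1.
Qed.

Lemma card_line b x : #|line b x| = d.
Proof.
have -> : line b x = if b then setX setT [set x] else setX [set x] setT.
  by apply/setP => -[c1 c2]; case: b; rewrite !inE ?andbT.
by case: b; rewrite cardsX cards1 cardsT card_ord ?muln1 ?mul1n.
Qed.

Lemma card_two_lines b1 x1 b2 x2 : (b1, x1) != (b2, x2) ->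
  (2 * d - 1 <= #|line b1 x1 :|: line b2 x2|)%N.
Proof.
move=> ne.
have h := cardsUI (line b1 x1) (line b2 x2).
rewrite !card_line in h.
suff : (#|line b1 x1 :&: line b2 x2| <= 1)%N by lia.
clear h; apply/card_le1_eqP => -[c1 c2] [c1' c2']; rewrite !inE /=.
case: b1 ne; case: b2 => /= ne;
  move=> /andP [/eqP e1 /eqP e2] /andP [/eqP e3 /eqP e4]; subst;
  by rewrite ?eqxx in ne.
Qed.

Lemma two_lines (S : {set M}) b1 x1 o1 b2 x2 o2 : (b1, x1) != (b2, x2) ->
  reduced S b1 x1 o1 -> reduced S b2 x2 o2 ->
  (#|S| <= 2 ^ (d * d - (2 * d - 1)))%N.
Proof.
move=> ne /reduced_cell [a1 a2] /reduced_cell [b1' b2'].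
set K := line b1 x1 :|: line b2 x2.
pose f c := if c \in line b1 x1 then shift b1 o1 c else shift b2 o2 c.
apply: (leq_trans (@count_det S K f _ _)).
- move=> c y; rewrite /f inE; case: ifP => [cl _|_ /= cl]; first exact: a1.
  exact: b1'.
- move=> B c hB; rewrite /f inE; case: ifP => [cl _|_ /= cl]; first exact: a2.
  exact: b2'.
apply: leq_pexp2l => //.
have := cardsC K; rewrite card_prod card_ord.
have := @card_two_lines b1 x1 b2 x2 ne; rewrite -/K; lia.
Qed.


Arguments two_lines {S b1 x1 o1 b2 x2 o2}.

Definition ev (e : bool * ('I_d * 'I_d)) : {set M} :=
  [set B | [forall k, get B e.1 e.2.2 k ==
     (if e.2.1 == e.2.2 then false else get B e.1 e.2.1 k)]].

Lemma evP b (r s : 'I_d) B : B \in ev (b, (r, s)) ->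
  forall k, get B b s k = if r == s then false else get B b r k.
Proof. by rewrite inE => /forallP h k; apply/eqP/h. Qed.

Lemma ev_reduced b (r s : 'I_d) : (r <= s)%N ->
  reduced (ev (b, (r, s))) b s (if r == s then None else Some r).
Proof.
move=> rs; split.
  by case: eqP => // /eqP ne y [<-]; rewrite ltn_neqAle ne.
by move=> B /evP h k; rewrite h; case: eqP.
Qed.

Lemma ev_lower b (r s : 'I_d) : (2 ^ (d * d - d) <= #|ev (b, (r, s))|)%N.
Proof.
pose src (c : C) : C := if b then (c.1, r) else (r, c.2).
pose phi (g : {ffun C -> bool}) : M := (\matrix_(i, j)
  (if (i, j) \in line b s then (if r == s then false else g (src (i, j))) else g (i, j)))%R.
have inj : {in pffun_on false (~: line b s) (@predT bool) &, injective phi}.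
  move=> g g' /pffun_onP [/subsetP hg _] /pffun_onP [/subsetP hg' _] e.
  apply/ffunP => -[i j].
  have := congr1 (fun A : M => A i j) e; rewrite /phi !mxE.
  case: ifP => [hl _|//].
  have := hg (i, j); have := hg' (i, j); rewrite !in_setC hl /= !inE.
  case: (g (i, j)); case: (g' (i, j)) => //= h1 h2; by [have := h1 isT | have := h2 isT].
have -> : (d * d - d = #|~: line b s|)%N.
  by have := cardsC (line b s); rewrite card_line card_prod card_ord; lia.
have -> : (2 ^ #|~: line b s| = #|pffun_on false (~: line b s) (@predT bool)|)%N.
  by rewrite card_pffun_on; congr (_ ^ _)%N; rewrite -card_bool.
rewrite -(card_in_imset inj); apply: subset_leq_card.
apply/subsetP => A /imsetP [g _ ->]; rewrite inE; apply/forallP => k.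
rewrite /get /phi /src; clear inj phi src; case: b => /=; rewrite !mxE !inE /= eqxx;
  by case: (r == s).
Qed.

Lemma ev_sing b (r s : 'I_d) B : (r <= s)%N -> B \in ev (b, (r, s)) -> singular01 B.
Proof.
move=> rs /evP h; rewrite /singular01.
wlog: b B h / b = false.
  case: b h => h; last by apply; [exact: h|].
  have -> : mx01 B = trmx (mx01 (trmx B)) by apply/matrixP => i j; rewrite !mxE.
  rewrite det_tr => H; apply: (H false) => // k; rewrite /get !mxE; exact: h k.
move=> eb; rewrite eb in h; rewrite /get /= in h.
case: (eqVneq r s) => [ers|ne].
  rewrite (expand_det_row _ s) big1 // => j _.
  by rewrite mxE h ers eqxx mul0r.
rewrite (determinant_alternate ne) // => j.
by rewrite !mxE h (negbTE ne).
Qed.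


Lemma same_line b (r r' s : 'I_d) : (r < r')%N -> (r' <= s)%N ->
  (#|ev (b, (r, s)) :&: ev (b, (r', s))| <= 2 ^ (d * d - (2 * d - 1)))%N.
Proof.
move=> rr' r's.
have rs : (r < s)%N by apply: leq_trans r's.
have nrs : (r == s) = false by apply/negbTE; rewrite neq_ltn rs.
set S := _ :&: _.
have R1 : reduced S b s (Some r).
  have := @reduced_sub (ev (b, (r, s))) S b s _ (subsetIl _ _) (ev_reduced b r s (ltnW rs)).
  by rewrite nrs.
case: (eqVneq r' s) => [er's|ner's].
  apply: (@two_lines S b s (Some r) b r None) => //.
    by rewrite xpair_eqE eqxx /= eq_sym nrs.
  split=> // B; rewrite inE => /andP [/evP h1 /evP h2] k.
  by have := h2 k; rewrite er's eqxx h1 nrs.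
apply: (@two_lines S b s (Some r) b r' (Some r)) => //.
  by rewrite xpair_eqE eqxx /= eq_sym ner's.
split=> [y [<-] //|B]; rewrite inE => /andP [/evP h1 /evP h2] k.
by have := h2 k; rewrite (negbTE ner's) h1 nrs => <-.
Qed.

Lemma ev_inter b (r s : 'I_d) b' (r' s' : 'I_d) : (r <= s)%N -> (r' <= s')%N ->
  (b, (r, s)) != (b', (r', s')) ->
  (#|ev (b, (r, s)) :&: ev (b', (r', s'))| <= 2 ^ (d * d - (2 * d - 1)))%N.
Proof.
move=> rs rs' ne.
case: (eqVneq (b, s) (b', s')) => [[eb es]|ne2].
  subst b' s'.
  have nr : r != r' by apply: contraNneq ne => ->.
  case: (ltngtP r r') => [lt|lt|eq]; first exact: same_line.
    by rewrite setIC; apply: same_line.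
  by move: nr; rewrite (val_inj eq) eqxx.
apply: (two_lines ne2).
  exact: (@reduced_sub (ev (b, (r, s))) _ b s _ (subsetIl _ _) (ev_reduced b r s rs)).
exact: (@reduced_sub (ev (b', (r', s'))) _ b' s' _ (subsetIr _ _) (ev_reduced b' r' s' rs')).
Qed.

End Count.

Lemma card_sum (T : finType) (X : {set T}) : #|X| = (\sum_(x : T) (x \in X))%N.
Proof. by rewrite -sum1_card big_mkcond; apply: eq_bigr => x _; case: (x \in X). Qed.

Lemma bonf (T I : finType) (J : {set I}) (A : I -> {set T}) :
  (\sum_(e in J) #|A e| <= #|\bigcup_(e in J) A e| +
     \sum_(e in J) \sum_(e' in J | e' != e) #|A e :&: A e'|)%N.
Proof.
under eq_bigr do rewrite card_sum.
under [X in (_ <= _ + X)%N]eq_bigr => e _ do under eq_bigr => e' _ do rewrite card_sum.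
under [X in (_ <= _ + X)%N]eq_bigr => e _ do rewrite exchange_big.
rewrite exchange_big [X in (_ <= _ + X)%N]exchange_big card_sum -big_split.
apply: leq_sum => x _ /=.
case: (pickP (fun e => (e \in J) && (x \in A e))) => [e0 /andP [e0J xe0] | none]; last first.
  rewrite big1 // => e eJ; by have := none e; rewrite eJ /= => ->.
have -> : x \in \bigcup_(e in J) A e by apply/bigcupP; exists e0.
rewrite (bigD1 e0) //= xe0 add1n ltnS.
rewrite [X in (_ <= X)%N](bigD1 e0) //=; apply: leq_trans (leq_addr _ _).
by apply: leq_sum => e /andP [eJ _]; rewrite inE xe0.
Qed.

Section J.
Variable d : nat.
Local Notation C := ('I_d * 'I_d)%type.

Definition J : {set bool * C} := [set e : bool * C | (e.2.1 <= e.2.2)%N].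

Lemma card_J : (d * d + d <= #|J|)%N.
Proof.
set T := [set p : C | (p.1 <= p.2)%N].
set T' := [set p : C | (p.2 <= p.1)%N].
have -> : J = setX setT T by apply/setP => -[b [r s]]; rewrite !inE.
rewrite cardsX cardsT card_bool.
have eT : #|T'| = #|T|.
  have -> : T' = (fun p : C => (p.2, p.1)) @: T.
    apply/setP => -[r s]; rewrite inE /=; apply/idP/imsetP => [h|[[r' s'] h [-> ->]]].
      by exists (s, r); rewrite // inE.
    by move: h; rewrite inE.
  by apply: card_imset => -[a b] [c e] [-> ->].
have eU : T :|: T' = setT.
  by apply/setP => -[r s]; rewrite !inE /= leq_total.
have eI : T :&: T' = [set (i, i) | i : 'I_d].
  apply/setP => -[r s]; rewrite !inE /=; apply/idP/imsetP => [/andP [h1 h2]|[i _ [-> ->]]].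
    exists r => //; congr (_, _); apply/val_inj/eqP; rewrite /= eqn_leq h1 h2 //.
  by rewrite leqnn.
have := cardsUI T T'.
rewrite eU eI cardsT card_prod card_ord card_imset ?card_ord ?eT; first lia.
by move=> i j [].
Qed.

End J.
Lemma pow_bound d : (30 <= d)%N -> (4 * d ^ 3 < 2 ^ (d - 1))%N.
Proof.
elim: d => [//|d IH].
rewrite leq_eqVlt => /orP [/eqP <-|h].
  rewrite /= (_ : 29 = 10 + 10 + 9)%N // !expnD; lia.
have {}IH := IH h.
have -> : (d.+1 - 1 = (d - 1).+1)%N by lia.
rewrite (expnS 2 (d - 1)).
have : ((d.+1) ^ 3 <= 2 * d ^ 3)%N.
  rewrite !expnS expn0; nia.
move: IH; move: (d.+1 ^ 3)%N (d ^ 3)%N (2 ^ (d - 1))%N => X Y Z. lia.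
Qed.

Local Open Scope ring_scope.

Theorem mainTheorem8 :
  exists N : nat, forall d : nat, (N <= d)%N ->
    (d ^ 2)%:R / (2 ^ d)%:R < P d.
Proof.
exists 30%N => d hd.
have d1 : (1 <= d)%N by apply: leq_trans hd.
set Sg := [pred B : 'M[bool]_d | singular01 B].
set U := \bigcup_(e in J d) ev d e.
have hU : (#|U| <= #|Sg|)%N.
  apply: subset_leq_card; apply/subsetP => B /bigcupP [[b [r s]] eJ hB].
  rewrite inE in eJ; exact: ev_sing hB.
have hB := bonf _ _ (J d) (ev d); rewrite -/U in hB.
have hlow : (#|J d| * 2 ^ (d * d - d) <= \sum_(e in J d) #|ev d e|)%N.
  rewrite -sum_nat_const; apply: leq_sum => -[b [r s]] _; exact: ev_lower.
have hup : (\sum_(e in J d) \sum_(e' in J d | e' != e) #|ev d e :&: ev d e'|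
    <= #|J d| * (#|J d| * 2 ^ (d * d - (2 * d - 1))))%N.
  rewrite -sum_nat_const; apply: leq_sum => -[b [r s]] eJ.
  apply: (@leq_trans (\sum_(e' in J d | e' != (b, (r, s))) 2 ^ (d * d - (2 * d - 1)))%N).
    apply: leq_sum => -[b' [r' s']] /andP [eJ' ne].
    move: eJ eJ'; rewrite !inE /= => eJ eJ'; apply: (@ev_inter d b r s b' r' s' eJ eJ'); by rewrite eq_sym.
  rewrite sum_nat_const leq_mul2r; apply/orP; right.
  by apply: subset_leq_card; apply/subsetP => x /andP [].
have hJ := card_J d.
have hJ2 : (#|J d| <= 2 * (d * d))%N.
  by rewrite (leq_trans (max_card _)) // card_prod card_bool card_prod card_ord.
have ea : (2 ^ (d * d - d) = 2 ^ (d * d - (2 * d - 1)) * 2 ^ (d - 1))%N.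
  by rewrite -expnD; congr (_ ^ _)%N; nia.
have ed : (2 ^ (d * d) = 2 ^ (d * d - d) * 2 ^ d)%N.
  by rewrite -expnD; congr (_ ^ _)%N; nia.
have pb := pow_bound d hd.
rewrite /P ltr_pdivrMr ?ltr0n ?expn_gt0 // mulrAC ltr_pdivlMr ?ltr0n ?expn_gt0 //.
rewrite -!natrM ltr_nat.
rewrite ed mulnA ltn_pmul2r ?expn_gt0 // -mulnn.
rewrite ea in hlow *.
have pp : (0 < 2 ^ (d * d - (2 * d - 1)))%N by rewrite expn_gt0.
move: hlow hup hB hU hJ hJ2 pb pp.
move: (#|J d|) (2 ^ (d * d - (2 * d - 1)))%N (2 ^ (d - 1))%N (\sum_(e in J d) _)%N
  (\sum_(e in J d) \sum_(e' in J d | e' != e) _)%N => m p q s t.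
move=> hlow hup hB hU hJ hJ2 pb pp.
have k1 : (m * m < (m - d * d) * q)%N.
  have h1 : (m * m <= 4 * (d * d) * (d * d))%N.
    have := leq_mul hJ2 hJ2; lia.
  have h2 : (4 * (d * d) * (d * d) < d * q)%N.
    have := pb; rewrite -(ltn_pmul2l d1) !expnS expn0; lia.
  have h3 : (d * q <= (m - d * d) * q)%N by rewrite leq_mul2r; apply/orP; right; lia.
  lia.
have k2 : (m * m * p < (m - d * d) * q * p)%N by rewrite ltn_pmul2r.
rewrite mulnBl mulnBl in k2.
have e1 : (m * q * p = m * (p * q))%N by rewrite -!mulnA [(q * p)%N]mulnC.
have e2 : (d * d * q * p = d * d * (p * q))%N by rewrite -!mulnA [(q * p)%N]mulnC.
have e3 : (m * m * p = m * (m * p))%N by rewrite mulnA.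
rewrite e1 e2 e3 in k2.
move: k2 hlow hup hB hU; move: (m * (p * q))%N (d * d * (p * q))%N (m * (m * p))%N => X Y Z.
rewrite -/Sg; move: #|U| #|Sg| => u v; lia.
Qed.
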